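(* Let $t\ge1$ be an integer and $\mathcal{I}\subseteq[K]$. Let $x,y\in\mathbb{R}^K$ with $x_i,y_i\in(0,1]$ for all $i\in\mathcal{I}$ and $\sum_{i\in\mathcal{I}}x_i=\sum_{i\in\mathcal{I}}y_i$, and suppose there is $c\in\mathbb{R}$ with $\nabla\phi^{t+1}_{\mathcal{I}}(y)=\nabla\phi^t_{\mathcal{I}}(x)-\hat\ell^t_{\mathcal{I}}+c\cdot\mathbf{1}_{\mathcal{I}}$ (coordinatewise on $\mathcal{I}$). Then $$\sum_{i\in\mathcal{I}}y_i^{4/3}\le2\Big(1+\frac1t\Big)^2\sum_{i\in\mathcal{I}}x_i^{4/3}\le8\sum_{i\in\mathcal{I}}x_i^{4/3}.$$
   Context: $\phi^s(x)=-3K^{1/6}\sqrt{s}\sum_{i\in[K]}x_i^{2/3}$ (the $2/3$-Tsallis regularizer of Decoupled-Tsallis-INF) and $\phi^s_{\mathcal{I}}(x)=-3K^{1/6}\sqrt{s}\sum_{i\in\mathcal{I}}x_i^{2/3}$. For a vector $v$, $v_{\mathcal{I}}$ agrees with $v$ on $\mathcal{I}$ and is $0$ elsewhere; $\mathbf{1}_{\mathcal{I}}$ is the indicator vector of $\mathcal{I}$. $\hat\ell^t$ is the loss estimator of Decoupled-Tsallis-INF: $\hat\ell^t_i=\mathbb{1}\{j^t=i\}\ell^t_i/g^t_i$ for some $j^t\in[K]$, $\ell^t\in[0,1]^K$ and a probability vector $g^t$ with positive entries. *)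

(* Defs.v *)
From mathcomp Require Import all_boot all_order all_algebra.
From mathcomp Require Import all_classical all_reals all_analysis.
Unset Printing Implicit Defensive.
Import Order.TTheory GRing.Theory Num.Theory.
Local Open Scope ring_scope.

Definition phiI {R : realType} (K : nat) (s : nat) (I : {set 'I_K})
  (x : 'I_K -> R) : R :=
  - 3 * (K%:R `^ (1/6)) * Num.sqrt (s%:R) * \sum_(i in I) (x i `^ (2/3)).

Definition partial {R : realType} {K : nat} (f : ('I_K -> R) -> R)
  (x : 'I_K -> R) (i : 'I_K) : R :=
  derive1 (fun z : R => f (fun k => if k == i then z else x k)) (x i).

Definition loss_est {R : realType} {K : nat} (j : 'I_K) (ell g : 'I_K -> R)
  : 'I_K -> R :=
  fun i => (if j == i then 1 else 0) * ell i / g i.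

(* Main.v *)
Require Import Defs.
From mathcomp Require Import all_boot all_order all_algebra.
From mathcomp Require Import all_classical all_reals all_analysis.
From mathcomp.algebra_tactics Require Import ring lra.
Import Order.TTheory GRing.Theory Num.Theory.
Local Open Scope ring_scope.

Lemma cube_le (R : realType) (a b : R) : 0 <= a -> 0 <= b -> a ^+ 3 <= b ^+ 3 -> a <= b.
Proof. by move=> a0 b0; rewrite (@ler_pXn2r _ 3) // ?nnegrE. Qed.

Lemma cubeK (R : realType) (z : R) : 0 <= z -> (z `^ (1/3)) ^+ 3 = z.
Proof.
move=> z0; rewrite -powR_mulrn ?powR_ge0 // -powRrM.
have -> : (1/3 : R) * 3%:R = 1 by field.
by rewrite powRr1.
Qed.

Lemma four_pow (R : realType) (z : R) : 0 <= z -> z `^ (4/3) = (z `^ (1/3)) ^+ 4.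
Proof.
move=> z0; rewrite -powR_mulrn ?powR_ge0 // -powRrM.
by congr (_ `^ _); field.
Qed.

Lemma ptwise (R : realType) (p q P : R) : 0 <= p -> p <= q -> 0 <= P ->
  q ^+ 3 - p ^+ 3 <= P ^+ 3 -> q ^+ 4 <= 2 * p ^+ 4 + 2 * P * (q ^+ 3 - p ^+ 3).
Proof.
move=> p0 pq P0 hP.
have q0 : 0 <= q by apply: le_trans pq.
have d0 : 0 <= q ^+ 3 - p ^+ 3 by rewrite subr_ge0 lerXn2r // ?nnegrE.
set e := (q ^+ 3 - p ^+ 3) `^ (1/3).
have e0 : 0 <= e by apply: powR_ge0.
have e3 : e ^+ 3 = q ^+ 3 - p ^+ 3 by rewrite cubeK.
have eP : e <= P by apply: cube_le => //; rewrite e3.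
have qpe : q <= p + e.
  apply: cube_le => //; first exact: addr_ge0.
  have : q ^+ 3 = p ^+ 3 + e ^+ 3 by rewrite e3; ring.
  move=> ->; nra.
rewrite -e3.
have h1 : q ^+ 4 <= (p + e) * (p ^+ 3 + e ^+ 3).
  have -> : q ^+ 4 = q * (p ^+ 3 + e ^+ 3) by rewrite e3; ring.
  apply: ler_wpM2r => //; apply: addr_ge0; exact: exprn_ge0.
have h2 : (p + e) * (p ^+ 3 + e ^+ 3) <= 2 * p ^+ 4 + 2 * e ^+ 4.
  have hh : 0 <= (p - e) ^+ 2 * (p ^+ 2 + p * e + e ^+ 2).
    apply: mulr_ge0; first exact: sqr_ge0.
    by apply: addr_ge0; [apply: addr_ge0; [exact: sqr_ge0|exact: mulr_ge0]|exact: sqr_ge0].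
  have -> : 2 * p ^+ 4 + 2 * e ^+ 4 = (p + e) * (p ^+ 3 + e ^+ 3) + (p - e) ^+ 2 * (p ^+ 2 + p * e + e ^+ 2) by ring.
  lra.
have h3 : e ^+ 4 <= P * e ^+ 3.
  rewrite exprS; apply: ler_wpM2r => //; exact: exprn_ge0.
lra.
Qed.
Lemma sum_alg (R : realType) (T : finType) (I : {set T}) (j : T) (p q : T -> R) :
  (forall i, i \in I -> 0 <= p i) -> (forall i, i \in I -> 0 <= q i) ->
  (forall i, i \in I -> i != j -> p i <= q i) ->
  \sum_(i in I) p i ^+ 3 = \sum_(i in I) q i ^+ 3 ->
  \sum_(i in I) q i ^+ 4 <= 2 * \sum_(i in I) p i ^+ 4.
Proof.
move=> p0 q0 pq hs.
case jI: (j \in I); last first.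
  have all : forall i, i \in I -> p i <= q i.
    by move=> i iI; apply: pq => //; apply: contraTneq iI => ->; rewrite jI.
  have hz : \sum_(i in I) (q i ^+ 3 - p i ^+ 3) = 0 by rewrite sumrB hs subrr.
  have ez : forall i, i \in I -> q i ^+ 3 - p i ^+ 3 = 0.
    apply: psumr_eq0P hz => i iI; rewrite subr_ge0 lerXn2r // ?nnegrE ?q0 ?p0 //.
    exact: all.
  rewrite mulr_sumr; apply: ler_sum => i iI.
  have qp : q i <= p i.
    apply: cube_le; [exact: q0|exact: p0|].
    by rewrite -subr_le0 (ez i iI).
  have : q i ^+ 4 <= p i ^+ 4 by rewrite lerXn2r // ?nnegrE ?q0 ?p0.
  have : 0 <= p i ^+ 4 by apply: exprn_ge0; exact: p0.
  lra.
have pj0 := p0 j jI; have qj0 := q0 j jI.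
set D := \sum_(i in I | i != j) (q i ^+ 3 - p i ^+ 3).
have hD : D = p j ^+ 3 - q j ^+ 3.
  move: hs; rewrite /D sumrB (bigD1 j) //= [X in _ = X -> _](bigD1 j) //=.
  move=> h; lra.
have dge : forall i, i \in I -> i != j -> 0 <= q i ^+ 3 - p i ^+ 3.
  by move=> i iI ij; rewrite subr_ge0 lerXn2r // ?nnegrE ?q0 ?p0 //; exact: pq.
have D0 : 0 <= D by apply: sumr_ge0 => i /andP[iI ij]; exact: dge.
have dD : forall i, i \in I -> i != j -> q i ^+ 3 - p i ^+ 3 <= p j ^+ 3.
  move=> i iI ij.
  have : q i ^+ 3 - p i ^+ 3 <= D.
    rewrite /D (bigD1 i) /=; last by rewrite iI ij.
    rewrite lerDl; apply: sumr_ge0 => k /andP[/andP[kI kj] _]; exact: dge.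
  have : 0 <= q j ^+ 3 by apply: exprn_ge0.
  lra.
have hJ : \sum_(i in I | i != j) q i ^+ 4 <=
    \sum_(i in I | i != j) (2 * p i ^+ 4 + 2 * p j * (q i ^+ 3 - p i ^+ 3)).
  apply: ler_sum => i /andP[iI ij]; apply: ptwise; [exact: p0|exact: pq|exact: pj0|exact: dD].
rewrite big_split /= -mulr_sumr -mulr_sumr -/D in hJ.
have qjpj : q j <= p j by apply: cube_le => //; lra.
have hq4 : q j ^+ 4 <= p j * q j ^+ 3.
  rewrite exprS; apply: ler_wpM2r => //; exact: exprn_ge0.
have hq3 : 0 <= p j * q j ^+ 3 by apply: mulr_ge0 => //; exact: exprn_ge0.
rewrite (bigD1 j) //= [X in _ <= 2 * X](bigD1 j) //=.
rewrite hD in hJ.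
have -> : p j ^+ 4 = p j * p j ^+ 3 by rewrite exprS.
lra.
Qed.
Lemma partial_phiI (R : realType) (K s : nat) (I : {set 'I_K}) (x : 'I_K -> R) i :
  i \in I -> 0 < x i ->
  partial (phiI K s I) x i =
  - 3 * (K%:R `^ (1/6)) * Num.sqrt (s%:R) * (2/3 * x i `^ (2/3 - 1)).
Proof.
move=> iI xi0; rewrite /partial /phiI.
set C := - 3 * _ * _.
set D := \sum_(k in I | k != i) x k `^ (2/3).
have -> : (fun z => C * \sum_(k in I) (if k == i then z else x k) `^ (2 / 3))
   = (fun z => C * (z `^ (2/3) + D)).
  apply: funext => z; rewrite (bigD1 i) //= eqxx; congr (_ * (_ + _)).
  by apply: eq_bigr => k /andP[_ /negbTE ->].
rewrite derive1E; apply: derive_val.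
apply: (is_derive_eq (f' := C * (2/3 * x i `^ (2/3 - 1) + 0))); last by rewrite addr0.
have h1 := is_derive1_powR (2/3) xi0.
have h2 : is_derive (x i) (1:R) (cst D) 0 by exact: is_derive_cst.
have h3 := is_deriveD h1 h2.
exact: (is_deriveZ C h3).
Qed.

Lemma inv_pow (R : realType) (z : R) : z `^ (2/3 - 1) = (z `^ (1/3))^-1.
Proof. by rewrite (_ : 2/3 - 1 = - (1/3)) ?powRN //; field. Qed.

Theorem lemma26 (R : realType) (K t : nat) (I : {set 'I_K})
  (j : 'I_K) (ell g : 'I_K -> R) (x y : 'I_K -> R) (c : R) :
  (1 <= t)%N ->
  (forall i, 0 <= ell i <= 1) ->
  (forall i, 0 < g i) -> \sum_i g i = 1 ->
  (forall i, i \in I -> 0 < x i <= 1) ->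
  (forall i, i \in I -> 0 < y i <= 1) ->
  \sum_(i in I) x i = \sum_(i in I) y i ->
  (forall i, i \in I ->
     partial (phiI K t.+1 I) y i
     = partial (phiI K t I) x i - loss_est j ell g i + c) ->
  \sum_(i in I) (y i `^ (4/3)) <=
    2 * (1 + 1 / t%:R) ^+ 2 * \sum_(i in I) (x i `^ (4/3)) /\
  2 * (1 + 1 / t%:R) ^+ 2 * \sum_(i in I) (x i `^ (4/3)) <=
    8 * \sum_(i in I) (x i `^ (4/3)).
Proof.
move=> t1 ell01 g0 gs x01 y01 hsum hder.
set T : R := t%:R.
have T1 : 1 <= T by rewrite /T ler1n.
have T0 : 0 < T by lra.
have S0 : 0 <= \sum_(i in I) (x i `^ (4/3)) by apply: sumr_ge0 => i _; exact: powR_ge0.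
have F1 : 1 <= (1 + 1 / T) ^+ 2.
  have : 0 <= 1 / T by rewrite divr_ge0 // ltW.
  move=> h; nra.
split; last first.
  have : 1 / T <= 1 by rewrite ler_pdivrMr // mul1r.
  have : 0 <= 1 / T by rewrite divr_ge0 // ltW.
  move=> h1 h2.
  have : (1 + 1 / T) ^+ 2 <= 4 by nra.
  move=> h3; nra.
set p := fun i => x i `^ (1/3).
set q := fun i => y i `^ (1/3).
have xi0 : forall i, i \in I -> 0 <= x i by move=> i /x01 /andP[/ltW].
have yi0 : forall i, i \in I -> 0 <= y i by move=> i /y01 /andP[/ltW].
have p0 : forall i, i \in I -> 0 < p i.
  by move=> i iI; apply: powR_gt0; case/andP: (x01 i iI).
have q0 : forall i, i \in I -> 0 < q i.
  by move=> i iI; apply: powR_gt0; case/andP: (y01 i iI).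
have -> : \sum_(i in I) (y i `^ (4/3)) = \sum_(i in I) q i ^+ 4.
  by apply: eq_bigr => i iI; rewrite four_pow // yi0.
have -> : \sum_(i in I) (x i `^ (4/3)) = \sum_(i in I) p i ^+ 4.
  by apply: eq_bigr => i iI; rewrite four_pow // xi0.
have hs : \sum_(i in I) p i ^+ 3 = \sum_(i in I) q i ^+ 3.
  have -> : \sum_(i in I) p i ^+ 3 = \sum_(i in I) x i.
    by apply: eq_bigr => i iI; rewrite /p cubeK // xi0.
  have -> : \sum_(i in I) q i ^+ 3 = \sum_(i in I) y i.
    by apply: eq_bigr => i iI; rewrite /q cubeK // yi0.
  exact: hsum.
set st := Num.sqrt T.
set st1 := Num.sqrt (t.+1%:R : R).
have stT : st ^+ 2 = T by rewrite sqr_sqrtr // ltW.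
have st1T : st1 ^+ 2 = T + 1 by rewrite sqr_sqrtr // /T -natr1.
have st0 : 0 < st by rewrite sqrtr_gt0.
have st1st : st <= st1 by rewrite ler_sqrt // /T ler_nat.
set L := loss_est j ell g.
have L0 : forall i, 0 <= L i.
  move=> i; rewrite /L /loss_est; apply: divr_ge0; last exact: ltW.
  by apply: mulr_ge0; [case: (j == i)|case/andP: (ell01 i)].
have Lj : forall i, i != j -> L i = 0.
  by move=> i ij; rewrite /L /loss_est eq_sym (negbTE ij) mul0r mul0r.
have key : forall i, i \in I ->
    2 * (K%:R `^ (1/6)) * (st1 * p i - st * q i) = p i * q i * (L i - c).
  move=> i iI.
  have := hder i iI.
  rewrite partial_phiI // ?(andP (y01 i iI)).1 // partial_phiI // ?(andP (x01 i iI)).1 //.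
  rewrite !inv_pow -/(p i) -/(q i) -/L -/st -/st1.
  have pn : p i != 0 by rewrite gt_eqF // p0.
  have qn : q i != 0 by rewrite gt_eqF // q0.
  move=> h.
  set A := K%:R `^ (1/6) in h *.
  have h' : 2 * A * st1 / q i - 2 * A * st / p i = L i - c.
    move: h; set u := (q i)^-1; set v := (p i)^-1.
    move=> h; lra.
  have -> : 2 * A * (st1 * p i - st * q i) =
    (2 * A * st1 / q i - 2 * A * st / p i) * (p i * q i).
    by field; rewrite pn qn.
  rewrite h'; ring.
have A0 : forall i, i \in I -> 0 < 2 * (K%:R `^ (1/6) : R).
  move=> i _; rewrite mulr_gt0 // powR_gt0 // ltr0n.
  by case: i => /= i' hi; apply: leq_ltn_trans hi.
case: (lerP c 0) => hc.
  have hi : forall i, i \in I -> q i ^+ 4 <= (1 + 1 / T) ^+ 2 * p i ^+ 4.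
    move=> i iI.
    have pi0 := p0 i iI; have qi0 := q0 i iI.
    have hk : 0 <= 2 * (K%:R `^ (1/6)) * (st1 * p i - st * q i).
      rewrite key //; apply: mulr_ge0; first by apply: mulr_ge0; apply: ltW.
      have := L0 i; lra.
    rewrite (pmulr_rge0 _ (A0 i iI)) subr_ge0 in hk.
    have hk4 : (st * q i) ^+ 4 <= (st1 * p i) ^+ 4.
      rewrite lerXn2r // nnegrE; apply: mulr_ge0; apply: ltW => //; exact: lt_le_trans st0 st1st.
    rewrite !exprMn in hk4.
    have e1 : st ^+ 4 = T ^+ 2 by rewrite -stT -exprM.
    have e2 : st1 ^+ 4 = (T + 1) ^+ 2 by rewrite -st1T -exprM.
    rewrite e1 e2 in hk4.
    have -> : (1 + 1 / T) ^+ 2 * p i ^+ 4 = ((T + 1) ^+ 2 * p i ^+ 4) / T ^+ 2.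
      by field; rewrite gt_eqF.
    by rewrite ler_pdivlMr ?exprn_gt0 // mulrC.
  apply: (le_trans (ler_sum _ (fun i iI => hi i iI))).
  rewrite -mulr_sumr.
  have : 0 <= \sum_(i in I) p i ^+ 4 by apply: sumr_ge0 => i iI; apply: exprn_ge0; apply: ltW; exact: p0.
  move=> h0; nra.
have hpq : forall i, i \in I -> i != j -> p i <= q i.
  move=> i iI ij.
  have pi0 := p0 i iI; have qi0 := q0 i iI.
  have hk := key i iI; rewrite Lj // sub0r in hk.
  have hneg : 2 * (K%:R `^ (1/6)) * (st1 * p i - st * q i) < 0.
    rewrite hk mulrN oppr_lt0; apply: mulr_gt0 => //; exact: mulr_gt0.
  rewrite (pmulr_rlt0 _ (A0 i iI)) subr_lt0 in hneg.
  have : st1 * p i < st1 * q i.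
    apply: (lt_le_trans hneg); apply: ler_wpM2r => //; exact: ltW.
  rewrite ltr_pM2l; first by move/ltW.
  exact: lt_le_trans st0 st1st.
have h2 := @sum_alg _ _ I j p q (fun i iI => ltW (p0 i iI)) (fun i iI => ltW (q0 i iI)) hpq hs.
have : 0 <= \sum_(i in I) p i ^+ 4 by apply: sumr_ge0 => i iI; apply: exprn_ge0; apply: ltW; exact: p0.
move=> h0; nra.
Qed.
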